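(* Let $R$ be a commutative Noetherian ring, $\mathfrak{a}$ an ideal of $R$, $M$ an $R$-module, and $\mathcal{S}$ a Serre subcategory of the category of $R$-modules and $R$-homomorphisms. Then $\mathfrak{a}M\in\mathcal{S}$ if and only if $M/(0:_M\mathfrak{a})\in\mathcal{S}$.
   Context: A Serre subcategory is a full subcategory closed under submodules, quotients and extensions. $(0:_M\mathfrak{a})=\{x\in M\mid \mathfrak{a}x=0\}$. *)

(* Defs.v *)
From HB Require Import structures.
From mathcomp Require Import all_boot all_order all_algebra.
Set Implicit Arguments. Unset Strict Implicit. Unset Printing Implicit Defensive.
Import GRing.Theory.
Local Open Scope ring_scope.

Definition is_ideal (R : comPzRingType) (a : R -> Prop) : Prop :=
  [/\ a 0, (forall x y, a x -> a y -> a (x + y)) & (forall r x, a x -> a (r * x))].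

Definition noetherian (R : comPzRingType) : Prop :=
  forall I : nat -> R -> Prop, (forall n, is_ideal (I n)) ->
    (forall n x, I n x -> I n.+1 x) ->
    exists N : nat, forall n x, (N <= n)%N -> I n x -> I N x.

Definition ideal_mul_mod (R : comPzRingType) (a : R -> Prop) (M : lmodType R) (x : M) : Prop :=
  exists s : seq (R * M), (forall p, p \in s -> a p.1) /\ x = \sum_(p <- s) p.1 *: p.2.

Definition annihilated (R : comPzRingType) (a : R -> Prop) (M : lmodType R) (x : M) : Prop :=
  forall r, a r -> r *: x = 0.

(* A Serre subcategory of R-Mod, given as a class of modules closed under
   submodules (injective linear maps), quotients (surjective linear maps)
   and extensions (short exact sequences). *)
Definition serre (R : comPzRingType) (S : lmodType R -> Prop) : Prop :=
  [/\ (forall (N M : lmodType R) (f : {linear N -> M}), injective f -> S M -> S N),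
      (forall (M N : lmodType R) (g : {linear M -> N}),
          (forall y, exists x, g x = y) -> S M -> S N) &
      (forall (N M L : lmodType R) (f : {linear N -> M}) (g : {linear M -> L}),
          injective f -> (forall y, exists x, g x = y) ->
          (forall m, g m = 0 <-> exists n, f n = m) ->
          S N -> S L -> S M)].

Definition submod_in (R : comPzRingType) (S : lmodType R -> Prop) (M : lmodType R)
    (P : M -> Prop) : Prop :=
  exists (N : lmodType R) (f : {linear N -> M}),
    [/\ injective f, (forall m, P m <-> exists n, f n = m) & S N].

Definition quotmod_in (R : comPzRingType) (S : lmodType R -> Prop) (M : lmodType R)
    (K : M -> Prop) : Prop :=
  exists (N : lmodType R) (g : {linear M -> N}),
    [/\ (forall y, exists x, g x = y), (forall m, g m = 0 <-> K m) & S N].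

(* Main.v *)
Require Import Defs.
From HB Require Import structures.
From mathcomp Require Import all_boot all_order all_algebra.
From Stdlib Require Import ClassicalEpsilon.
Set Warnings "-all".
Set Implicit Arguments. Unset Strict Implicit. Unset Printing Implicit Defensive.
Import GRing.Theory.
Local Open Scope ring_scope.

Definition pb (P : Prop) : bool := if excluded_middle_informative P then true else false.
Lemma pbP (P : Prop) : reflect P (pb P).
Proof. rewrite /pb; case: excluded_middle_informative => h; by constructor. Qed.

Section Img.
Variables (R : comPzRingType) (A B : lmodType R) (h : {linear A -> B}).
Definition imgP : pred B := fun y => pb (exists x, h x = y).
Lemma imgP_closed : subsemimod_closed imgP.
Proof.
split.
  split; first by apply/pbP; exists 0; rewrite linear0.
  move=> u v /pbP[x <-] /pbP[y <-]; apply/pbP; exists (x + y); by rewrite linearD.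
move=> c u /pbP[x <-]; apply/pbP; exists (c *: x); by rewrite linearZ.
Qed.
HB.instance Definition _ := GRing.isSubmodClosed.Build R B imgP imgP_closed.
Record img : Type := Img {imgv :> B; imgvP : imgP imgv}.
HB.instance Definition _ := [isSub for imgv].
HB.instance Definition _ := [Choice of img by <:].
HB.instance Definition _ := [SubChoice_isSubLmodule of img by <:].
Definition incl (u : img) : B := imgv u.
Lemma incl_lin : linear incl.
Proof. by move=> c u v. Qed.
HB.instance Definition _ := GRing.isLinear.Build R img B *:%R incl incl_lin.
Lemma incl_inj : injective incl.
Proof. exact: val_inj. Qed.
Definition cor (x : A) : img := Img (introT (pbP _) (ex_intro _ x erefl)).
Lemma cor_lin : linear cor.
Proof. move=> c u v; apply: val_inj => /=. by rewrite linearP. Qed.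
HB.instance Definition _ := GRing.isLinear.Build R A img *:%R cor cor_lin.
Lemma incl_cor x : incl (cor x) = h x. Proof. by []. Qed.
Lemma cor_surj y : exists x, cor x = y.
Proof. case: y => y Py; case/pbP: (Py) => x ex. exists x; apply: val_inj => /=. done. Qed.
Lemma incl_range y : (exists u, incl u = y) <-> exists x, h x = y.
Proof. split; first by case=> -[u Pu] <-; case/pbP: (Pu) => x e; exists x.
 by case=> x <-; exists (cor x). Qed.
End Img.

Section Pr.
Variables (R : comPzRingType) (A B : lmodType R).
Definition inl_ (x : A) : A * B := (x, 0).
Lemma inl_lin : linear inl_. Proof. move=> c u v; rewrite /inl_. by apply: injective_projections => //=; rewrite scaler0 addr0. Qed.
HB.instance Definition _ := GRing.isLinear.Build R A (A * B)%type *:%R inl_ inl_lin.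
Definition snd_ (x : A * B) : B := x.2.
Lemma snd_lin : linear snd_. Proof. by move=> c u v. Qed.
HB.instance Definition _ := GRing.isLinear.Build R (A * B)%type B *:%R snd_ snd_lin.
End Pr.

Section Maps.
Variables (R : comPzRingType).

Section Sc.
Variables (A : lmodType R) (r : R).
Definition scm (x : A) : A := r *: x.
Lemma scm_lin : linear scm.
Proof. by move=> c u v; rewrite /scm scalerDr !scalerA mulrC. Qed.
HB.instance Definition _ := GRing.isLinear.Build R A A *:%R scm scm_lin.
End Sc.

Section Zero.
Variables (A B : lmodType R).
Definition zm (x : A) : B := 0.
Lemma zm_lin : linear zm.
Proof. by move=> c u v; rewrite /zm scaler0 addr0. Qed.
HB.instance Definition _ := GRing.isLinear.Build R A B *:%R zm zm_lin.
End Zero.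

Section PairM.
Variables (A B C : lmodType R) (p : {linear A -> B}) (q : {linear A -> C}).
Definition pm (x : A) : B * C := (p x, q x).
Lemma pm_lin : linear pm.
Proof. by move=> c u v; rewrite /pm !linearP. Qed.
HB.instance Definition _ := GRing.isLinear.Build R A (B * C)%type *:%R pm pm_lin.
End PairM.

Section SumM.
Variables (A B C : lmodType R) (p : {linear A -> C}) (q : {linear B -> C}).
Definition sm (x : A * B) : C := p x.1 + q x.2.
Lemma sm_lin : linear sm.
Proof. move=> c u v; rewrite /sm /= !linearP scalerDr.
by rewrite -!addrA; congr (_ + _); rewrite addrCA. Qed.
HB.instance Definition _ := GRing.isLinear.Build R (A * B)%type C *:%R sm sm_lin.
End SumM.

Section FactInj.
Variables (A B C : lmodType R) (f : {linear B -> C}) (finj : injective f)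
  (k : {linear A -> C}) (H : forall x, exists y, f y = k x).
Definition fi (x : A) : B := proj1_sig (constructive_indefinite_description _ (H x)).
Lemma fiE x : f (fi x) = k x.
Proof. exact: proj2_sig (constructive_indefinite_description _ (H x)). Qed.
Lemma fi_lin : linear fi.
Proof. move=> c u v; apply: finj; by rewrite linearP !fiE linearP. Qed.
HB.instance Definition _ := GRing.isLinear.Build R A B *:%R fi fi_lin.
Definition fiL : {linear A -> B} := fi.
Lemma fiLE x : f (fiL x) = k x. Proof. exact: fiE. Qed.
End FactInj.

Section FactSurj.
Variables (A B C : lmodType R) (g : {linear A -> B}) (gs : forall y, exists x, g x = y)
  (k : {linear A -> C}) (H : forall x, g x = 0 -> k x = 0).
Definition fs (y : B) : C := k (proj1_sig (constructive_indefinite_description _ (gs y))).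
Lemma fsE x : fs (g x) = k x.
Proof.
rewrite /fs; case: constructive_indefinite_description => x' /= e.
apply/eqP; rewrite -subr_eq0 -linearB; apply/eqP/H; by rewrite linearB e subrr.
Qed.
Lemma fs_lin : linear fs.
Proof. move=> c u v; have [x <-] := gs u; have [y <-] := gs v.
by rewrite -linearP !fsE linearP. Qed.
HB.instance Definition _ := GRing.isLinear.Build R B C *:%R fs fs_lin.
Definition fsL : {linear B -> C} := fs.
Lemma fsLE x : fsL (g x) = k x. Proof. exact: fsE. Qed.
End FactSurj.
End Maps.

Section Serre.
Variables (R : comPzRingType) (S : lmodType R -> Prop) (hS : serre S).

Lemma S_prod (A B : lmodType R) : S A -> S B -> S (A * B)%type.
Proof.
case: hS => _ _ ext SA SB.
have := ext _ _ _ (@inl_ _ A B) (@snd_ _ A B).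
apply => //.
- by move=> x y [].
- by move=> y; exists (0, y).
- case=> x y; rewrite /= /snd_ /=; split.
    by move=> ->; exists x.
  by case=> n [_ <-].
Qed.

Lemma S_sub (A B : lmodType R) (h : {linear A -> B}) : S B -> S (img h).
Proof. case: hS => sub _ _; have := sub _ _ (@incl _ _ _ h) (@incl_inj _ _ _ h); apply. Qed.

Lemma S_quo (A B : lmodType R) (h : {linear A -> B}) : S A -> S (img h).
Proof. case: hS => _ quo _; have := quo _ _ (@cor _ _ _ h) (@cor_surj _ _ _ h); apply. Qed.
End Serre.

Section Ideals.
Variable (R : comPzRingType).

Fixpoint span (s : seq R) (x : R) : Prop :=
  match s with
  | [::] => x = 0
  | r :: s' => exists c y, span s' y /\ x = c * r + y
  end.

Lemma span0 s : span s 0.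
Proof. elim: s => [|r s IH] //=; exists 0, 0; by rewrite mul0r addr0. Qed.
Lemma spanD s x y : span s x -> span s y -> span s (x + y).
Proof.
elim: s x y => [|r s IH] x y /=; first by move=> -> ->; rewrite addr0.
case=> c [x' [hx ->]] [d [y' [hy ->]]]; exists (c + d), (x' + y'); split; first exact: IH.
by rewrite mulrDl -!addrA; congr (_ + _); rewrite addrCA.
Qed.
Lemma spanM s r x : span s x -> span s (r * x).
Proof.
elim: s x => [|q s IH] x /=; first by move=> ->; rewrite mulr0.
case=> c [x' [hx ->]]; exists (r * c), (r * x'); split; first exact: IH.
by rewrite mulrDr mulrA.
Qed.
Lemma span_ideal s : is_ideal (span s).
Proof. split; [exact: span0 | exact: spanD | exact: spanM]. Qed.
Lemma span_cons r s x : span s x -> span (r :: s) x.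
Proof. by move=> h; exists 0, x; rewrite mul0r add0r. Qed.
Lemma span_head r s : span (r :: s) r.
Proof. exists 1, 0; split; [exact: span0 | by rewrite mul1r addr0]. Qed.

Lemma fin_gen (a : R -> Prop) : noetherian R -> is_ideal a ->
  exists s, (forall r, r \in s -> a r) /\ (forall r, a r -> span s r).
Proof.
move=> hN ha; apply: NNPP => hno.
have ex : forall s : seq R, exists x, (forall r, r \in s -> a r) -> a x /\ ~ span s x.
  move=> s; case: (classic (forall r, r \in s -> a r)) => hs; last by exists 0.
  have : ~ (forall r, a r -> span s r) by move=> h; apply: hno; exists s.
  move/not_all_ex_not => [x hx]; exists x => _.
  case: (classic (a x)) => hax; first by split.
  by exfalso; apply: hx.
pose nx s := proj1_sig (constructive_indefinite_description _ (ex s)).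
have nxP s : (forall r, r \in s -> a r) -> a (nx s) /\ ~ span s (nx s).
  exact: proj2_sig (constructive_indefinite_description _ (ex s)).
pose L := fix L n := match n with 0 => [::] | n'.+1 => nx (L n') :: L n' end.
have La : forall n r, r \in L n -> a r.
  elim=> [|n IH] r //=; rewrite inE => /orP[/eqP -> | /IH //].
  by case: (nxP _ IH).
have [N HN] := hN (fun n => span (L n)) (fun n => span_ideal (L n))
   (fun n x h => span_cons _ h).
have := HN N.+1 (nx (L N)) (leqnSn N) (span_head _ _).
by case: (nxP _ (La N)).
Qed.
End Ideals.

Section Mods.
Variables (R : comPzRingType) (M : lmodType R).

Fixpoint Tm (s : seq R) (m : M) : Prop :=
  match s with
  | [::] => m = 0
  | r :: s' => exists x y, Tm s' y /\ m = r *: x + y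
  end.

Lemma Tm0 s : Tm s 0.
Proof. elim: s => [|r s IH] //=; exists 0, 0; by rewrite scaler0 addr0. Qed.
Lemma TmD s x y : Tm s x -> Tm s y -> Tm s (x + y).
Proof.
elim: s x y => [|r s IH] x y /=; first by move=> -> ->; rewrite addr0.
case=> u [x' [hx ->]] [v [y' [hy ->]]]; exists (u + v), (x' + y'); split; first exact: IH.
by rewrite scalerDr -!addrA; congr (_ + _); rewrite addrCA.
Qed.
Lemma Tm_span s c v : span s c -> Tm s (c *: v).
Proof.
elim: s c => [|r s IH] c /=; first by move=> ->; rewrite scale0r.
case=> d [c' [hc ->]]; exists (d *: v), (c' *: v); split; first exact: IH.
by rewrite scalerDl scalerA mulrC.
Qed.

Lemma Tm_aM (a : R -> Prop) s : (forall r, r \in s -> a r) -> (forall r, a r -> span s r) ->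
  forall m, ideal_mul_mod a m <-> Tm s m.
Proof.
move=> sa as_ m; split.
  case=> l [hl ->]; elim: l hl => [|p l IH] hl; first by rewrite big_nil; apply: Tm0.
  rewrite big_cons; apply: TmD; last by apply: IH => q hq; apply: hl; rewrite inE hq orbT.
  by apply: Tm_span; apply: as_; apply: hl; rewrite inE eqxx.
clear as_; elim: s sa m => [|r s IH] sa m /=.
  by move=> ->; exists [::]; split => //; rewrite big_nil.
case=> x [y [hy ->]].
have sa' : forall q, q \in s -> a q by move=> q hq; apply: sa; rewrite inE hq orbT.
have [l [hl ->]] := IH sa' y hy.
exists ((r, x) :: l); split; last by rewrite big_cons.
move=> p; rewrite inE => /orP[/eqP -> | /hl //]; apply: sa; by rewrite inE eqxx.
Qed.

Definition anns (s : seq R) (m : M) := forall r, r \in s -> r *: m = 0.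

Lemma anns_ann (a : R -> Prop) s : (forall r, r \in s -> a r) -> (forall r, a r -> span s r) ->
  forall m, annihilated a m <-> anns s m.
Proof.
move=> sa as_ m; split; first by move=> h r /sa; apply: h.
move=> h r /as_; clear as_; elim: s sa h r => [|q s IH] sa h r /=.
  by move=> ->; rewrite scale0r.
case=> c [y [hy ->]]; rewrite scalerDl -scalerA (h q (mem_head _ _)) scaler0 add0r.
apply: (IH _ _ _ hy).
- by move=> p hp; apply: sa; rewrite inE hp orbT.
- by move=> p hp; apply: h; rewrite inE hp orbT.
Qed.
End Mods.

Section Dirs.
Variables (R : comPzRingType) (S : lmodType R -> Prop) (hS : serre S) (M : lmodType R)
  (a : R -> Prop).

Lemma anns_cons r s (m : M) : anns (r :: s) m <-> r *: m = 0 /\ anns s m.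
Proof.
split; first by move=> h; split; [apply: h; exact: mem_head | move=> q hq; apply: h; rewrite inE hq orbT].
by case=> h1 h2 q; rewrite inE => /orP[/eqP -> // | /h2].
Qed.

Lemma fwd (N0 : lmodType R) (f : {linear N0 -> M}) (finj : injective f)
  (hr : forall m, ideal_mul_mod a m <-> exists n, f n = m) (SN0 : S N0) :
  forall s, (forall r, r \in s -> a r) ->
  exists (N : lmodType R) (g : {linear M -> N}),
    [/\ (forall y, exists x, g x = y), (forall m, g m = 0 <-> anns s m) & S N].
Proof.
elim=> [|r s IH] sa.
  exists (img (@zm _ M N0)), (@cor _ _ _ (@zm _ M N0)); split.
  - exact: cor_surj.
  - move=> m; split=> // _; apply: incl_inj; by rewrite incl_cor linear0.
  - exact: S_sub.
have sa' : forall q, q \in s -> a q by move=> q hq; apply: sa; rewrite inE hq orbT.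
have [N2 [g2 [g2s g2k SN2]]] := IH sa'.
have H : forall x, exists y, f y = @scm _ M r x.
  move=> x; apply/hr; exists [:: (r, x)]; split; last by rewrite big_seq1.
  by move=> p; rewrite inE => /eqP ->; apply: sa; exact: mem_head.
pose fr := @fiL _ _ _ _ f finj (@scm _ M r) H.
pose p := @pm _ _ _ _ fr g2.
exists (img p), (@cor _ _ _ p); split.
- exact: cor_surj.
- move=> m; rewrite anns_cons -g2k.
  have -> : (@cor _ _ _ p m = 0) <-> (p m = 0).
    split; first by move/(congr1 (@incl _ _ _ p)); rewrite incl_cor linear0.
    by move=> e; apply: incl_inj; rewrite incl_cor linear0; exact: e.
  rewrite /p /pm /=; split.
    case=> e1 e2; split=> //; have := fiE H m; rewrite e1 linear0 => <-; done.
  case=> e1 e2; congr pair => //; apply: (finj); by rewrite fiE linear0.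
- apply: S_sub => //; exact: S_prod.
Qed.

Lemma bwd (N1 : lmodType R) (g : {linear M -> N1}) (gs : forall y, exists x, g x = y)
  (hk : forall m, g m = 0 <-> annihilated a m) (SN1 : S N1) :
  forall s, (forall r, r \in s -> a r) ->
  exists (N : lmodType R) (f : {linear N -> M}),
    [/\ injective f, (forall m, Tm s m <-> exists n, f n = m) & S N].
Proof.
elim=> [|r s IH] sa.
  exists (img (@zm _ N1 M)), (@incl _ _ _ (@zm _ N1 M)); split.
  - exact: incl_inj.
  - move=> m; rewrite incl_range /=; split; first by move=> ->; exists 0.
    by case=> x <-.
  - exact: S_quo.
have sa' : forall q, q \in s -> a q by move=> q hq; apply: sa; rewrite inE hq orbT.
have [N2 [f2 [f2i f2r SN2]]] := IH sa'.
have H : forall x, g x = 0 -> @scm _ M r x = 0.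
  by move=> x /hk hx; apply: hx; apply: sa; exact: mem_head.
pose rho := @fsL _ _ _ _ g gs (@scm _ M r) H.
pose k := @sm _ _ _ _ rho f2.
exists (img k), (@incl _ _ _ k); split.
- exact: incl_inj.
- move=> m; rewrite incl_range /=; split.
    case=> x [y [hy ->]]; have [z ez] := (f2r y).1 hy.
    exists (g x, z); rewrite /k /sm -ez; congr (_ + _); exact: fsE.
  case=> -[u z] <-; have [x <-] := gs u; exists x, (f2 z); split.
    by apply/f2r; exists z.
  rewrite /k /sm; congr (_ + _); exact: fsE.
- apply: S_quo => //; exact: S_prod.
Qed.
End Dirs.

Theorem lemma2p1 (R : comPzRingType) (a : R -> Prop) (M : lmodType R)
    (S : lmodType R -> Prop) :
  noetherian R -> is_ideal a -> serre S ->
  (submod_in S (ideal_mul_mod a (M:=M)) <-> quotmod_in S (annihilated a (M:=M))).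
Proof.
move=> hN ha hS; have [s [sa as_]] := fin_gen hN ha.
split.
  case=> N0 [f [fi fr SN0]].
  have [N [g [gs gk SN]]] := fwd hS fi fr SN0 sa.
  exists N, g; split=> // m; rewrite gk; symmetry; exact: anns_ann.
case=> N1 [g [gs gk SN1]].
have [N [f [fi fr SN]]] := bwd hS gs gk SN1 sa.
exists N, f; split=> // m; rewrite -fr; exact: Tm_aM.
Qed.
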